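(* Let $A=(a_{ij})$ be an irreducible $d\times d$ matrix with entries in $\{0,1\}$, let $\rho$ be its Perron–Frobenius eigenvalue and $\mathbf v=(v_1,\dots,v_d)$ a positive probability vector with $A\mathbf v=\rho\mathbf v$. For $\mathbf z=(z_1,\dots,z_d)$ let $A(\mathbf z)$ be the matrix obtained from $A$ by replacing each entry $1$ in the $j$-th column by $z_j$. For $\mathbf q\in M_d^*=\{\mathbf q\in\mathbb R^d: q_i>0\ \forall i,\ \sum_i q_i=1\}$ define $\mathbf s(\mathbf q)=(s_1,\dots,s_d)$ by $s_j=\dfrac{q_j}{v_j\sum_{i=1}^d q_ia_{ij}/v_i}$. Then $$\det\big(I-A(\mathbf s(\mathbf q))\big)=0\quad\text{for all }\mathbf q\in M_d^*.$$
   Context: $I$ is the $d\times d$ identity matrix. *)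

(* Defs.v *)
From HB Require Import structures.
From mathcomp Require Import all_boot all_order all_algebra.
From mathcomp Require Import complex.
Set Implicit Arguments. Unset Strict Implicit. Unset Printing Implicit Defensive.
Import Order.TTheory GRing.Theory Num.Theory.
Local Open Scope ring_scope.

Definition mxpow (R : pzRingType) (d : nat) (A : 'M[R]_d) (k : nat) : 'M[R]_d :=
  iter k (mulmx A) 1%:M.

Definition zero_one_mx (R : pzRingType) (d : nat) (A : 'M[R]_d) : Prop :=
  forall i j, A i j = 0 \/ A i j = 1.

Definition irreducible_mx (R : numDomainType) (d : nat) (A : 'M[R]_d) : Prop :=
  (forall i j, 0 <= A i j) /\
  forall i j : 'I_d, exists k : nat, 0 < mxpow A k.+1 i j.

(* rho is the Perron--Frobenius eigenvalue of A: a real eigenvalue of A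
   equal to the spectral radius (all complex eigenvalues have modulus <= rho). *)
Definition pf_eigenvalue (R : rcfType) (d : nat) (A : 'M[R]_d) (rho : R) : Prop :=
  eigenvalue A rho /\
  forall lam : R[i],
    root (char_poly (map_mx (fun x : R => (x%:C)%C) A)) lam -> `|lam| <= (rho%:C)%C.

Definition Az (R : pzRingType) (d : nat) (A : 'M[R]_d) (z : 'I_d -> R) : 'M[R]_d :=
  \matrix_(i, j) (if A i j == 1 then z j else A i j).

Definition s_of (R : fieldType) (d : nat) (A : 'M[R]_d) (v q : 'I_d -> R) : 'I_d -> R :=
  fun j => q j / (v j * \sum_(i < d) q i * A i j / v i).

Definition open_simplex (R : numDomainType) (d : nat) (q : 'I_d -> R) : Prop :=
  (forall i, 0 < q i) /\ \sum_(i < d) q i = 1.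

(* Main.v *)
Require Import Defs.
From HB Require Import structures.
From mathcomp Require Import all_boot all_order all_algebra.
From mathcomp Require Import complex.
Import Order.TTheory GRing.Theory Num.Theory.
Local Open Scope ring_scope.

Lemma mxpowSr (R : pzRingType) (d : nat) (A : 'M[R]_d) k :
  mxpow A k.+1 = mxpow A k *m A.
Proof.
elim: k => [|k IH]; first by rewrite /mxpow /= mulmx1 mul1mx.
change (A *m mxpow A k.+1 = mxpow A k.+1 *m A).
by rewrite {1}IH mulmxA.
Qed.

Theorem corollary2 (R : rcfType) (d : nat) (A : 'M[R]_d) (rho : R)
  (v : 'I_d -> R) :
  zero_one_mx A ->
  irreducible_mx A ->
  pf_eigenvalue A rho ->
  open_simplex v ->
  A *m (\col_i v i) = rho *: (\col_i v i) ->
  forall q : 'I_d -> R, open_simplex q ->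
    \det (1%:M - Az A (s_of A v q)) = 0.
Proof.
move=> A01 [Ange Airr] _ [vpos vsum] _ q [qpos qsum].
have vne i : v i != 0 by rewrite gt_eqF.
have c_ne j : \sum_(i < d) q i * A i j / v i != 0.
  have [k Hk] := Airr j j.
  rewrite mxpowSr mxE in Hk.
  have [l Alj] : exists l, A l j != 0.
    apply/existsP; apply: contraTT Hk; rewrite negb_exists => /forallP H.
    rewrite big1 ?ltxx // => l _.
    move: (H l); rewrite negbK => /eqP ->; rewrite mulr0. done.
  apply/negP => /eqP/psumr_eq0P H.
  have : q l * A l j / v l = 0.
    apply: H => // i _.
    apply: divr_ge0; [apply: mulr_ge0 => //; exact: ltW | exact: ltW].
  by apply/eqP; rewrite mulf_neq0 ?invr_eq0 // ?mulf_neq0 // gt_eqF.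
apply/eqP; apply/det0P.
exists (\row_i (q i / v i)).
  apply/negP => /eqP/rowP H.
  move: qsum; rewrite big1 => [/eqP|i _]; first by rewrite eq_sym oner_eq0.
  move: (H i); rewrite !mxE => /eqP; rewrite mulf_eq0 invr_eq0 (negbTE (vne i)) orbF.
  by move/eqP.
apply/eqP; rewrite mulmxBr mulmx1 subr_eq0; apply/eqP/rowP => j; rewrite !mxE.
have E i : (\row_i (q i / v i)) 0 i * Az A (s_of A v q) i j
   = (q i * A i j / v i) * s_of A v q j.
  rewrite !mxE; case: (A01 i j) => ->; rewrite ?eqxx ?(eq_sym 0) ?oner_eq0.
    by rewrite !(mulr0, mul0r).
  by rewrite mulr1.
rewrite (eq_bigr _ (fun i _ => E i)) -mulr_suml /s_of.
set c := \sum_(i < d) _.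
have cj : c != 0 by apply: c_ne.
have vj := vne j.
rewrite [v j * c]mulrC invfM mulrCA !mulrA. by rewrite mulfK.
Qed.
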